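(* Let $f\in\mathcal F$. If $g_1\in\mathcal M_f$ and $g_2\in\mathcal M_{fg_1}$, then $g:=g_1g_2\in\mathcal M_f$ and $fg\in\mathcal F$. In particular, if $g\in\mathcal M_f\cap\mathcal M_{fg}$, then $g^2\in\mathcal M_f$.
   Context: $\Lambda=[-\pi,\pi]$. For $h\ge0$, $G(h)=\exp\{\frac1{2\pi}\int_\Lambda\ln h\,d\lambda\}$ if $\ln h\in L^1(\Lambda)$, else $G(h)=0$. For a spectral density $f$ ($f\ge0$, $f\in L^1(\Lambda)$, positive on a set of positive measure), $\sigma_n^2(f)=\min_{c_1,\dots,c_n\in\mathbb C}\int_\Lambda|1-\sum_{k=1}^n c_ke^{-ik\lambda}|^2f(\lambda)\,d\lambda$, $\sigma_n(f)=\sqrt{\sigma_n^2(f)}$. $\mathcal F=\{f\in L^1(\Lambda): f\ge0,\ G(f)=0,\ \lim_{n\to\infty}\sigma_{n+1}(f)/\sigma_n(f)=1\}$. For $f\in\mathcal F$, $\mathcal M_f=\{g\ge0: G(g)>0,\ fg\in L^1(\Lambda),\ \lim_{n\to\infty}\sigma_n^2(fg)/\sigma_n^2(f)=G(g)\}$. *)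

(* Defs.v *)
From HB Require Import structures.
From mathcomp Require Import all_boot all_order all_algebra.
From mathcomp Require Import all_classical all_reals all_analysis.
Set Implicit Arguments. Unset Strict Implicit. Unset Printing Implicit Defensive.
Import Order.TTheory GRing.Theory Num.Theory.
Import numFieldNormedType.Exports.
Local Open Scope classical_set_scope.
Local Open Scope ring_scope.

Section Spectral.
Variable R : realType.

Definition Lam : set R := `[(- pi)%R, pi]%classic.

Notation leb := (@lebesgue_measure R).

Definition lnE (x : R) : \bar R := if (0 < x)%R then (ln x)%:E else -oo%E.

Definition log_integrable (h : R -> R) : Prop :=
  leb.-integrable Lam (fun x => lnE (h x)).

Definition Ggeo (h : R -> R) : R :=
  if `[< log_integrable h >] then
    expR ((2 * pi)^-1 * fine (\int[leb]_(x in Lam) lnE (h x)))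
  else 0.

(* |1 - sum_{k=1}^n c_k e^{-ik x}|^2 with c_k = a k + i b k *)
Definition trig_err (n : nat) (a b : nat -> R) (x : R) : R :=
  (1 - \sum_(1 <= k < n.+1) (a k * cos (k%:R * x) + b k * sin (k%:R * x))) ^+ 2
  + (\sum_(1 <= k < n.+1) (b k * cos (k%:R * x) - a k * sin (k%:R * x))) ^+ 2.

(* sigma_n^2(f) = min over c_1..c_n in C of int_Lambda |1 - sum c_k e^{-ik.}|^2 f *)
Definition sigma2 (n : nat) (f : R -> R) : R :=
  fine (ereal_inf [set (\int[leb]_(x in Lam) (trig_err n ab.1 ab.2 x * f x)%:E)%E
                  | ab in [set: (nat -> R) * (nat -> R)]]).

Definition sigma (n : nat) (f : R -> R) : R := Num.sqrt (sigma2 n f).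

Definition spectral_density (f : R -> R) : Prop :=
  [/\ (forall x, Lam x -> (0 <= f x)%R),
      leb.-integrable Lam (EFin \o f)
    & (0 < leb (Lam `&` [set x | (0 < f x)%R]))%E].

Definition classF (f : R -> R) : Prop :=
  [/\ spectral_density f, Ggeo f = 0
    & (fun n => sigma n.+1 f / sigma n f) @ \oo --> (1 : R)].

Definition classM (f g : R -> R) : Prop :=
  [/\ (forall x, Lam x -> 0 <= g x), 0 < Ggeo g,
      leb.-integrable Lam (EFin \o (f \* g))
    & (fun n => sigma2 n (f \* g) / sigma2 n f) @ \oo --> Ggeo g].

End Spectral.

(* Main.v *)
Require Import Defs.
From HB Require Import structures.
From mathcomp Require Import all_boot all_order all_algebra.
From mathcomp Require Import all_classical all_reals all_analysis.
From mathcomp Require Import measurable_realfun realfun.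
Import Order.TTheory GRing.Theory Num.Theory.
Import numFieldNormedType.Exports.
Local Open Scope classical_set_scope.
Local Open Scope ring_scope.

Section H.
Context {R : realType}.
Notation leb := (@lebesgue_measure R).
Notation L := (@Lam R).

Lemma mLam : measurable (Lam (R:=R)).
Proof. exact: measurable_itv. Qed.

Lemma trig_ge0 n a b (x : R) : 0 <= trig_err n a b x.
Proof. by rewrite /trig_err addr_ge0 // sqr_ge0. Qed.

Lemma measurable_trig n (a b : nat -> R) : measurable_fun setT (trig_err n a b).
Proof.
have mc k : measurable_fun setT (fun x : R => cos (k%:R * x)).
  apply: (measurableT_comp (f:=cos) (g:=fun x : R => k%:R * x)).
    exact: (continuous_measurable_fun (@continuous_cos R)).
  by apply: measurable_funM.
have ms k : measurable_fun setT (fun x : R => sin (k%:R * x)).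
  apply: (measurableT_comp (f:=sin) (g:=fun x : R => k%:R * x)).
    exact: (continuous_measurable_fun (@continuous_sin R)).
  by apply: measurable_funM.
rewrite /trig_err; apply: measurable_funD; apply: measurable_funX.
  apply: measurable_funB => //; apply: measurable_sum => k.
  by apply: measurable_funD; apply: measurable_funM.
apply: measurable_sum => k.
by apply: measurable_funB; apply: measurable_funM.
Qed.

Lemma sigma2_ge0 n (h : R -> R) : (forall x, Lam x -> 0 <= h x) -> 0 <= sigma2 n h.
Proof.
move=> h0; rewrite /sigma2; apply: fine_ge0; apply: le_ereal_inf_tmp => y [ab _ <-].
apply: integral_ge0 => x Lx; rewrite lee_fin mulr_ge0 //; [exact: trig_ge0| exact: h0].
Qed.


Lemma sigma2_eq0 n (h : R -> R) : (forall x, Lam x -> 0 <= h x) ->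
  measurable_fun L h -> leb (L `&` [set x | 0 < h x]) = 0%E -> sigma2 n h = 0.
Proof.
move=> h0 mh N0.
have I (ab : (nat -> R) * (nat -> R)) :
    (\int[leb]_(x in L) (trig_err n ab.1 ab.2 x * h x)%:E = 0)%E.
  rewrite (ae_eq_integral (cst 0%E)) ?integral0 //; first exact: mLam.
  - apply/measurable_EFinP; apply: measurable_funM => //.
    exact: measurable_funS (measurable_trig _ _ _).
  - exists (L `&` [set x | 0 < h x]); split => //.
      exact: (measurable_fun_ltr (measurable_cst (0:R)) mh) mLam [set true] I.
    move=> x /not_implyP [Lx nf]; split => //=.
    have := h0 x Lx; rewrite le_eqVlt => /orP[/eqP h0x|//]; exfalso; apply: nf.
    by rewrite /= -h0x mulr0.
rewrite /sigma2 (_ : [set _ | ab in _] = [set 0%E]) ?ereal_inf1 //.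
apply/seteqP; split => [y [ab _ <-]|y ->]; first by rewrite /= I.
by exists ((fun=> 0), (fun=> 0)) => //; rewrite I.
Qed.


Lemma lnEM (x y : R) : 0 <= x -> 0 <= y -> lnE (x * y) = (lnE x + lnE y)%E.
Proof.
rewrite /lnE => x0 y0.
have [xp|xn] := ltP 0 x; have [yp|yn] := ltP 0 y.
- by rewrite mulr_gt0 // lnM ?posrE.
- have -> : y = 0 by apply/eqP; rewrite eq_le yn y0.
  by rewrite mulr0 ltxx addeNy.
- have -> : x = 0 by apply/eqP; rewrite eq_le xn x0.
  by rewrite mul0r ltxx addNye.
- have -> : x = 0 by apply/eqP; rewrite eq_le xn x0.
  by rewrite mul0r ltxx addNye.
Qed.

Lemma Gpos_logint (g : R -> R) : 0 < Ggeo g -> log_integrable g.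
Proof. by rewrite /Ggeo; case: asboolP => // _; rewrite ltxx. Qed.

Lemma GM (g1 g2 : R -> R) : (forall x, L x -> 0 <= g1 x) -> (forall x, L x -> 0 <= g2 x) ->
  log_integrable g1 -> log_integrable g2 ->
  log_integrable (g1 \* g2) /\ Ggeo (g1 \* g2) = Ggeo g1 * Ggeo g2.
Proof.
move=> p1 p2 i1 i2.
have E : {in L, (fun x => lnE (g1 x) + lnE (g2 x))%E =1 (fun x => lnE ((g1 \* g2) x))}%E.
  by move=> x /set_mem Lx; rewrite /= lnEM //; [exact: p1|exact: p2].
have li : log_integrable (g1 \* g2).
  rewrite /log_integrable. have := @eq_integrable _ _ _ leb L _ (fun x => lnE (g1 x) + lnE (g2 x))%E (fun x => lnE ((g1 \* g2) x)). apply.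
  - exact: mLam.
  - exact: E.
  - by apply: integrableD => //; exact: mLam.
split => //; rewrite /Ggeo !asboolT //.
have I : (\int[leb]_(x in L) lnE ((g1 \* g2) x) =
   \int[leb]_(x in L) lnE (g1 x) + \int[leb]_(x in L) lnE (g2 x))%E.
  rewrite -(@eq_integral _ _ _ leb L _ _ E).
  by apply: integralD => //; exact: mLam.
rewrite I fineD; first by rewrite -expRD -mulrDr.
  by apply: integrable_fin_num => //; exact: mLam.
by apply: integrable_fin_num => //; exact: mLam.
Qed.


Lemma abse_tri (a b : \bar R) : a != +oo%E -> b != +oo%E ->
  (`|a| <= `|a + b| + `|b|)%E.
Proof.
case: a => [r| |] // _; case: b => [s| |] // _.
- rewrite /= lee_fin.
  by rewrite -{1}(addrK s r) (le_trans (ler_normB _ _)).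
all: try by rewrite /= ?addeNy /= ?addey ?leey.
Qed.

Lemma lnE_ny (x : R) : lnE x != +oo%E.
Proof. by rewrite /lnE; case: ifP. Qed.

Lemma measurable_lnE : measurable_fun setT (@lnE R).
Proof.
rewrite /lnE.
apply: (measurable_fun_ifT (g := fun x : R => (ln x)%:E) (h := fun _ => -oo%E) (f := fun x : R => 0 < x)).
- exact: measurable_fun_ltr.
- by apply/measurable_EFinP; exact: measurable_ln.
- exact: measurable_cst.
Qed.

Lemma logint_div (f g : R -> R) : (forall x, L x -> 0 <= f x) -> (forall x, L x -> 0 <= g x) ->
  measurable_fun L f -> log_integrable g -> log_integrable (f \* g) -> log_integrable f.
Proof.
move=> p1 p2 mf ig ifg; rewrite /log_integrable.
have := @le_integrable _ _ _ leb L _ (fun x => lnE (f x))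
   (fun x => `|lnE ((f \* g) x)| + `|lnE (g x)|)%E; apply.
- exact: mLam.
- apply: (measurableT_comp (f := @lnE R) (g := f)) => //; exact: measurable_lnE.
- move=> x Lx; rewrite (@gee0_abs _ (_ + _)%E) ?adde_ge0 //.
  rewrite /= lnEM; [|exact: p1|exact: p2].
  by apply: abse_tri; exact: lnE_ny.
- have := @integrableD _ _ _ leb L _ (fun x => `|lnE ((f \* g) x)|%E) (fun x => `|lnE (g x)|%E); apply.
  + exact: mLam.
  + exact: (integrable_abse ifg).
  + exact: (integrable_abse ig).
Qed.


Lemma ev_ne0 (a : nat -> R) (l : R) : a @ \oo --> l -> 0 < l -> \forall n \near \oo, a n != 0.
Proof.
move=> H l0; have H0 : \forall n \near \oo, 0 < a n by exact: (cvgr_gt _ H).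
by apply: filterS H0 => n; exact: lt0r_neq0.
Qed.

Lemma ratio_mul (s t u : nat -> R) (a b : R) : (fun n => t n / s n) @ \oo --> a ->
  (fun n => u n / t n) @ \oo --> b -> 0 < a -> (fun n => u n / s n) @ \oo --> b * a.
Proof.
move=> ha hb a0.
apply: cvg_trans (cvgM hb ha); apply: near_eq_cvg.
near=> n.
have tn : t n / s n != 0 by near: n; exact: ev_ne0 ha a0.
have t0 : t n != 0 by apply: contraNneq tn => ->; rewrite mul0r.
by rewrite /= -mulrA (mulrA (t n)^-1) mulVf // mul1r.
Unshelve. all: by end_near.
Qed.


End H.

Section H2.
Context {R : realType}.
Notation leb := (@lebesgue_measure R).
Notation L := (@Lam R).
Lemma part1 (f g1 g2 : R -> R) : classF f -> classM f g1 -> classM (f \* g1) g2 ->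
  classM f (g1 \* g2) /\ classF (f \* (g1 \* g2)).
Proof.
move=> [[f0 fi fpos] Gf cF] [g10 G1 ifg1 c1] [g20 G2 ifg c2].
have eqf : f \* (g1 \* g2) = (f \* g1) \* g2 by apply/funext => x; rewrite /= mulrA.
have p1 : forall x, L x -> 0 <= (f \* g1) x.
  by move=> x Lx; rewrite /= mulr_ge0 //; [exact: f0|exact: g10].
have p : forall x, L x -> 0 <= ((f \* g1) \* g2) x.
  by move=> x Lx; rewrite /= mulr_ge0 //; [exact: p1|exact: g20].
have [lg Gg] := GM _ _ g10 g20 (Gpos_logint _ G1) (Gpos_logint _ G2).
have Gpos : 0 < Ggeo (g1 \* g2) by rewrite Gg mulr_gt0.
have cM : (fun n => sigma2 n ((f \* g1) \* g2) / sigma2 n f) @ \oo --> Ggeo (g1 \* g2).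
  have E : Ggeo g2 * Ggeo g1 = Ggeo (g1 \* g2) by rewrite Gg mulrC.
  by rewrite -E; exact: (ratio_mul _ _ _ _ _ c1 c2 G1).
have hM : classM f (g1 \* g2).
  split.
  - by move=> x Lx; rewrite /= mulr_ge0 //; [exact: g10|exact: g20].
  - exact: Gpos.
  - rewrite eqf; exact: ifg.
  - rewrite eqf; exact: cM.
split => //; rewrite eqf; split.
- split => //.
  rewrite lt0e measure_ge0 andbT; apply/eqP => N0.
  have mh : measurable_fun L ((f \* g1) \* g2).
    by apply/measurable_EFinP; exact: measurable_int ifg.
  have Z : (fun n => sigma2 n ((f \* g1) \* g2) / sigma2 n f) = cst 0.
    by apply/funext => n; rewrite (sigma2_eq0 n _ p mh N0) mul0r.
  move: cM; rewrite Z => /cvg_lim; rewrite lim_cst // => G0.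
  by move: Gpos; rewrite -G0 ?ltxx.
- rewrite /Ggeo; case: asboolP => // lh; exfalso.
  have mf : measurable_fun L f by apply/measurable_EFinP; exact: measurable_int fi.
  have mfg1 : measurable_fun L (f \* g1).
    by apply/measurable_EFinP; exact: measurable_int ifg1.
  have l1 : log_integrable (f \* g1) := logint_div _ _ p1 g20 mfg1 (Gpos_logint _ G2) lh.
  have l0 : log_integrable f := logint_div _ _ f0 g10 mf (Gpos_logint _ G1) l1.
  by move: Gf; rewrite /Ggeo asboolT //; apply/eqP; rewrite gt_eqF // expR_gt0.
- set h := (f \* g1) \* g2.
  have Gne : Ggeo (g1 \* g2) != 0 by rewrite gt_eqF.
  set G := Ggeo (g1 \* g2).
  set a := (fun n => sigma2 n.+1 h / sigma2 n.+1 f).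
  set q := (fun n => sigma n.+1 f / sigma n f).
  set w := (fun n => sigma2 n h / sigma2 n f).
  have ca : a @ \oo --> G by rewrite /a; rewrite (cvg_shiftS (fun n => sigma2 n h / sigma2 n f)); exact: cM.
  have cq : q @ \oo --> (1:R) by exact: cF.
  have cw : w @ \oo --> G by exact: cM.
  have K : (fun n => a n * (q n * q n) * (w n)^-1) @ \oo --> G * (1 * 1) / G.
    apply: cvgM; [apply: cvgM => //; exact: cvgM|exact: cvgV].
  have K2 : (fun n => Num.sqrt (a n * (q n * q n) * (w n)^-1)) @ \oo --> Num.sqrt (G * (1 * 1) / G).
    exact: (cvg_comp _ _ K (@sqrt_continuous R _)).
  have E1 : Num.sqrt (G * (1 * 1) / G) = 1 by rewrite !mulr1 mulfV // sqrtr1.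
  rewrite E1 in K2.
  apply: cvg_trans K2.
  apply: near_eq_cvg.
  have ev1 := ev_ne0 _ _ cq ltr01.
  have ev2 := ev_ne0 _ _ cw Gpos.
  near=> n.
  have q0 : q n != 0 by near: n; exact: ev1.
  have w0 : w n != 0 by near: n; exact: ev2.
  rewrite /a /q /w /= in q0 w0 *.
  have sn1 : sigma n.+1 f != 0 by apply: contraNneq q0 => ->; rewrite mul0r.
  have sn : sigma n f != 0 by apply: contraNneq q0 => ->; rewrite invr0 mulr0.
  have s1 : sigma2 n.+1 f != 0 by apply: contraNneq sn1; rewrite /sigma => ->; rewrite sqrtr0.
  have s0 : sigma2 n f != 0 by apply: contraNneq sn; rewrite /sigma => ->; rewrite sqrtr0.
  have u0 : sigma2 n h != 0 by apply: contraNneq w0 => ->; rewrite mul0r.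
  have qq : sigma n.+1 f / sigma n f * (sigma n.+1 f / sigma n f) = sigma2 n.+1 f / sigma2 n f.
    rewrite /sigma mulrACA -invfM -!expr2 !sqr_sqrtr //; exact: sigma2_ge0.
  rewrite qq.
  have -> : sigma2 n.+1 h / sigma2 n.+1 f * (sigma2 n.+1 f / sigma2 n f) *
     (sigma2 n h / sigma2 n f)^-1 = sigma2 n.+1 h / sigma2 n h.
    by rewrite invf_div !mulrA divfK // divfK.
  rewrite /sigma sqrtrM ?sqrtrV //; [exact: sigma2_ge0 | exact: sigma2_ge0].
Unshelve. all: by end_near.
Qed.

End H2.

Theorem mainTheorem9 (R : realType) :
  (forall (f g1 g2 : R -> R),
      classF f -> classM f g1 -> classM (f \* g1) g2 ->
      classM f (g1 \* g2) /\ classF (f \* (g1 \* g2)))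
  /\
  (forall (f g : R -> R),
      classF f -> classM f g -> classM (f \* g) g ->
      classM f (g \* g)).
Proof.
split.
- by move=> f g1 g2 hF h1 h2; exact: part1.
- move=> f g hF h1 h2; have [H _] := part1 _ _ _ hF h1 h2; exact: H.
Qed.
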